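(* Let $m,n$ be positive integers, $\psi:[1,\infty)\to(0,\infty)$ non-increasing and continuous, and let $r=\mathcal D_{m,n}(\psi):[t_0,\infty)\to\mathbb R$. For $t\in\mathbb R$ let $f_t=\mathrm{diag}(e^{t/m},\dots,e^{t/m},e^{-t/n},\dots,e^{-t/n})\in SL_{m+n}(\mathbb R)$ ($m$ entries $e^{t/m}$, $n$ entries $e^{-t/n}$), and let $\Delta(\Lambda)=\max_{\mathbf v\in\Lambda\setminus\{0\}}\log(1/\|\mathbf v\|)$ for lattices $\Lambda\subset\mathbb R^{m+n}$. Then a unimodular lattice $\Lambda\subset\mathbb R^{m+n}$ is $(\psi,n)$-approximable if and only if there exist arbitrarily large $t>0$ with $\Delta(f_t\Lambda)\ge r(t)$. In particular, a matrix $A\in M_{m,n}(\mathbb R)$ is $\psi$-approximable if and only if there exist arbitrarily large $t>0$ with $\Delta(f_t\Lambda_A)\ge r(t)$.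
   Context: $\|\cdot\|$ is the max norm. For $\mathbf v\in\mathbb R^{m+n}$, $\mathbf v^{(m)}$ = first $m$ coordinates, $\mathbf v_{(n)}$ = last $n$ coordinates. $\Lambda$ is $(\psi,n)$-approximable if there exist $\mathbf v\in\Lambda$ with $\|\mathbf v_{(n)}\|$ arbitrarily large and $\|\mathbf v^{(m)}\|^m\le\psi(\|\mathbf v_{(n)}\|^n)$. $A\in M_{m,n}(\mathbb R)$ is $\psi$-approximable if there are infinitely many $\mathbf q\in\mathbb Z^n$ with $\|A\mathbf q+\mathbf p\|^m\le\psi(\|\mathbf q\|^n)$ for some $\mathbf p\in\mathbb Z^m$. $\Lambda_A=\begin{pmatrix}I_m&A\\0&I_n\end{pmatrix}\mathbb Z^{m+n}$. $\mathcal D_{m,n}(\psi)$ is the unique continuous function $r:[t_0,\infty)\to\mathbb R$, with $t_0=-\frac n{m+n}\log\psi(1)$, such that $t\mapsto t-nr(t)$ is strictly increasing and tends to $\infty$, $t\mapsto t+mr(t)$ is nondecreasing, and $\psi(e^{t-nr(t)})=e^{-t-mr(t)}$ for all $t\ge t_0$. *)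

(* Defs.v *)
From HB Require Import structures.
From mathcomp Require Import all_boot all_order all_algebra.
From mathcomp Require Import all_classical all_reals all_analysis.
Unset Printing Implicit Defensive.
Import Order.TTheory GRing.Theory Num.Theory numFieldNormedType.Exports.
Local Open Scope classical_set_scope.
Local Open Scope ring_scope.

Section Defs.
Variable R : realType.

Definition mnorm (k : nat) (v : 'cV[R]_k) : R := \big[Num.max/0]_(i < k) `|v i 0|.

Definition lattice_of (k : nat) (g : 'M[R]_k) : set 'cV[R]_k :=
  [set g *m map_mx (fun z : int => z%:~R) z | z in [set: 'cV[int]_k]].

(* (psi,n)-approximability of a set of vectors in R^{m+n}:
   v^(m) = usubmx v (first m coords), v_(n) = dsubmx v (last n coords) *)
Definition psi_n_approximable (m n : nat) (psi : R -> R)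
    (L : set 'cV[R]_(m + n)) : Prop :=
  forall M : R, exists2 v, L v &
    M < mnorm _ (dsubmx v) /\
    mnorm _ (usubmx v) ^+ m <= psi (mnorm _ (dsubmx v) ^+ n).

Definition psi_approximable (m n : nat) (psi : R -> R) (A : 'M[R]_(m, n)) : Prop :=
  ~ finite_set [set q : 'cV[int]_n | exists p : 'cV[int]_m,
      mnorm _ (A *m map_mx (fun z : int => z%:~R) q + map_mx (fun z : int => z%:~R) p) ^+ m
        <= psi (mnorm _ (map_mx (fun z : int => z%:~R) q) ^+ n)].

Definition Lambda_A (m n : nat) (A : 'M[R]_(m, n)) : set 'cV[R]_(m + n) :=
  lattice_of _ (block_mx 1%:M A 0 1%:M).

Definition ft (m n : nat) (t : R) : 'M[R]_(m + n) :=
  diag_mx (row_mx (const_mx (expR (t / m%:R)) : 'rV[R]_m)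
                  (const_mx (expR (- t / n%:R)) : 'rV[R]_n)).

Definition Delta (k : nat) (L : set 'cV[R]_k) : R :=
  sup [set ln ((mnorm _ v)^-1) | v in L `\ 0].

Definition t0 (m n : nat) (psi : R -> R) : R :=
  - (n%:R / (m + n)%:R) * ln (psi 1).

(* r is (a representative on [t0,oo) of) D_{m,n}(psi): the defining properties.
   We also require e^{t - n r(t)} >= 1, i.e. that psi is evaluated in its
   domain [1,oo). *)
Definition is_Dmn (m n : nat) (psi : R -> R) (r : R -> R) : Prop :=
  let T0 := t0 m n psi in
  {within [set t : R | T0 <= t], continuous (r : R -> R)} /\
  (forall s t, T0 <= s -> s < t -> s - n%:R * r s < t - n%:R * r t) /\
  (forall M : R, exists T : R, forall t, T <= t -> M < t - n%:R * r t) /\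
  (forall s t, T0 <= s -> s <= t -> s + m%:R * r s <= t + m%:R * r t) /\
  (forall t, T0 <= t -> 0 <= t - n%:R * r t) /\
  (forall t, T0 <= t -> psi (expR (t - n%:R * r t)) = expR (- t - m%:R * r t)).

End Defs.

Arguments mnorm {R} k v.
Arguments lattice_of {R} k g.
Arguments psi_n_approximable {R} m n psi L.
Arguments psi_approximable {R} m n psi A.
Arguments Lambda_A {R} m n A.
Arguments ft {R} m n t.
Arguments Delta {R} k L.
Arguments t0 {R} m n psi.
Arguments is_Dmn {R} m n psi r.

(* Main.v *)
Require Import Defs.
From HB Require Import structures.
From mathcomp Require Import all_boot all_order all_algebra.
From mathcomp Require Import all_classical all_reals all_analysis.
From mathcomp Require Import zify ring lra.
Import Order.TTheory GRing.Theory Num.Theory numFieldNormedType.Exports.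
Local Open Scope classical_set_scope.
Local Open Scope ring_scope.

Section Aux.
Context {R : realType}.

Lemma mnorm_ge0 {k} (v : 'cV[R]_k) : 0 <= mnorm k v.
Proof. exact: bigmax_ge_id. Qed.

Lemma mnorm_leP {k} (v : 'cV[R]_k) c :
  mnorm k v <= c <-> 0 <= c /\ (forall i, `|v i 0| <= c).
Proof.
split; first by move/bigmax_leP => [? H]; split => // i; exact: H.
by move=> [c0 H]; apply/bigmax_leP; split.
Qed.

Lemma le_mnorm {k} (v : 'cV[R]_k) i : `|v i 0| <= mnorm k v.
Proof. exact: le_bigmax. Qed.

Lemma mnorm_ltP {k} (v : 'cV[R]_k) c : 0 < c -> (forall i, `|v i 0| < c) -> mnorm k v < c.
Proof. by move=> c0 H; apply/bigmax_ltP; split. Qed.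

Lemma mnorm_eq0 {k} (v : 'cV[R]_k) : mnorm k v = 0 -> v = 0.
Proof.
move=> h; apply/matrixP => i j; rewrite ord1 mxE.
by apply/eqP; rewrite -normr_le0; have := le_mnorm v i; rewrite h.
Qed.

Lemma mnorm0 {k} : mnorm k (0 : 'cV[R]_k) = 0.
Proof.
apply/le_anti; rewrite mnorm_ge0 andbT.
by apply/mnorm_leP; split => // i; rewrite mxE normr0.
Qed.

Lemma mnorm_gt0 {k} (v : 'cV[R]_k) : v != 0 -> 0 < mnorm k v.
Proof.
move=> hv; rewrite lt_def mnorm_ge0 andbT; apply/eqP => h.
by move: hv; rewrite (mnorm_eq0 _ h) eqxx.
Qed.

Lemma mnormZ {k} (v : 'cV[R]_k) c : mnorm k (c *: v) = `|c| * mnorm k v.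
Proof.
apply/le_anti/andP; split.
  apply/mnorm_leP; split; first by rewrite mulr_ge0 ?mnorm_ge0.
  by move=> i; rewrite mxE normrM ler_wpM2l ?le_mnorm.
have [->|c0] := eqVneq c 0; first by rewrite normr0 mul0r mnorm_ge0.
rewrite -ler_pdivlMl ?normr_gt0 //.
apply/mnorm_leP; split; first by rewrite mulr_ge0 ?invr_ge0 ?mnorm_ge0.
move=> i; rewrite ler_pdivlMl ?normr_gt0 //.
by have := le_mnorm (c *: v) i; rewrite mxE normrM.
Qed.

Lemma mnormN {k} (v : 'cV[R]_k) : mnorm k (- v) = mnorm k v.
Proof. by rewrite -scaleN1r mnormZ normrN1 mul1r. Qed.

Lemma mnormD {k} (u v : 'cV[R]_k) : mnorm k (u + v) <= mnorm k u + mnorm k v.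
Proof.
apply/mnorm_leP; split; first by rewrite addr_ge0 ?mnorm_ge0.
by move=> i; rewrite mxE (le_trans (ler_normD _ _)) // lerD ?le_mnorm.
Qed.

Lemma mnorm_usub {m n} (v : 'cV[R]_(m + n)) : mnorm m (usubmx v) <= mnorm (m + n) v.
Proof.
apply/mnorm_leP; split; first exact: mnorm_ge0.
by move=> i; rewrite mxE le_mnorm.
Qed.

Lemma mnorm_dsub {m n} (v : 'cV[R]_(m + n)) : mnorm n (dsubmx v) <= mnorm (m + n) v.
Proof.
apply/mnorm_leP; split; first exact: mnorm_ge0.
by move=> i; rewrite mxE le_mnorm.
Qed.

Lemma mnorm_col_le {m n} (v : 'cV[R]_(m + n)) c :
  mnorm m (usubmx v) <= c -> mnorm n (dsubmx v) <= c -> mnorm (m + n) v <= c.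
Proof.
move=> /mnorm_leP [c0 hu] /mnorm_leP [_ hd]; apply/mnorm_leP; split => // i.
case: (split_ordP i) => j ->.
  by have := hu j; rewrite mxE.
by have := hd j; rewrite mxE.
Qed.

Definition mxsum {p k} (A : 'M[R]_(p, k)) := \sum_i \sum_j `|A i j|.

Lemma mxsum_ge0 {p k} (A : 'M[R]_(p, k)) : 0 <= mxsum A.
Proof. by apply: sumr_ge0 => i _; apply: sumr_ge0 => j _. Qed.

Lemma mnorm_mul {p k} (A : 'M[R]_(p, k)) v : mnorm p (A *m v) <= mxsum A * mnorm k v.
Proof.
apply/mnorm_leP; split; first by rewrite mulr_ge0 ?mxsum_ge0 ?mnorm_ge0.
move=> i; rewrite mxE (le_trans (ler_norm_sum _ _ _)) //.
apply: (@le_trans _ _ ((\sum_j `|A i j|) * mnorm k v)).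
  rewrite mulr_suml; apply: ler_sum => j _; rewrite normrM ler_wpM2l //.
  exact: le_mnorm.
rewrite ler_wpM2r ?mnorm_ge0 //.
rewrite /mxsum (bigD1 i) //= lerDl; apply: sumr_ge0 => i' _.
by apply: sumr_ge0.
Qed.

End Aux.

Section Lat.
Context {R : realType}.

Definition zR {k} (z : 'cV[int]_k) : 'cV[R]_k := map_mx (fun z : int => z%:~R) z.

Lemma zRB {k} (z w : 'cV[int]_k) : zR (z - w) = zR z - zR w.
Proof. by apply/matrixP => i j; rewrite !mxE intrB. Qed.

Lemma zRZ {k} (z : 'cV[int]_k) (j : int) : zR (j *: z) = j%:~R *: zR z.
Proof. by apply/matrixP => i l; rewrite !mxE intrM. Qed.

Lemma zR_ge1 {k} (z : 'cV[int]_k) : z != 0 -> 1 <= mnorm k (zR z).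
Proof.
move=> hz; have [i hi] : exists i, z i 0 != 0.
  apply/existsP; apply: contraNT hz; rewrite negb_exists => /forallP H.
  apply/eqP/matrixP => i j; rewrite ord1 mxE; exact/eqP/negPn/H.
apply: le_trans (le_mnorm (zR z) i); rewrite mxE -intr_norm.
by rewrite ler1z -gtz0_ge1 normr_gt0.
Qed.

Lemma unit_det1 {k} (g : 'M[R]_k) : `|\det g| = 1 -> g \in unitmx.
Proof.
move=> h; rewrite unitmxE unitfE; apply/eqP => h0.
by move: h; rewrite h0 normr0 => /eqP; rewrite eq_sym oner_eq0.
Qed.

Lemma unit_mul_neq0 {k} (g : 'M[R]_k) (x : 'cV[R]_k) :
  g \in unitmx -> x != 0 -> g *m x != 0.
Proof.
move=> gu; apply: contraNN => /eqP h.
by rewrite -(mulKmx gu x) h mulmx0.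
Qed.

Lemma zR_neq0 {k} (z : 'cV[int]_k) : z != 0 -> zR z != 0.
Proof.
move=> /zR_ge1 h; apply/eqP => h0; move: h; rewrite h0 mnorm0.
by rewrite ler10.
Qed.

Lemma lat_disc {k} (g : 'M[R]_k) : g \in unitmx ->
  exists2 C, 0 < C & forall z : 'cV[int]_k, mnorm k (zR z) <= C * mnorm k (g *m zR z).
Proof.
move=> gu; exists (mxsum (invmx g) + 1).
  by rewrite ltr_wpDl ?mxsum_ge0.
move=> z; rewrite -{1}(mulKmx gu (zR z)).
apply: le_trans (mnorm_mul _ _) _.
by rewrite ler_wpM2r ?mnorm_ge0 // lerDl.
Qed.

Lemma int_bound {k} (z : 'cV[int]_k) (b : nat) :
  mnorm k (zR z) <= b%:R -> forall i, `|z i 0| <= b%:Z.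
Proof.
move=> h i; have := le_trans (le_mnorm _ i) h.
by rewrite mxE -intr_norm -(ler_int R) .
Qed.

Definition box k b := {ffun 'I_k -> 'I_(2 * b).+1}.
Definition dec {k b} (x : box k b) : 'cV[int]_k := \col_i ((x i : nat)%:Z - b%:Z).
Definition enc {k} b (w : 'cV[int]_k) : box k b :=
  [ffun i => inord (absz (w i 0 + b%:Z))].

Lemma encK {k} b (w : 'cV[int]_k) : (forall i, `|w i 0| <= b%:Z) -> dec (enc b w) = w.
Proof.
move=> H; apply/matrixP => i j; rewrite ord1 !mxE ffunE.
have := H i; set a := w i 0; rewrite ler_norml => /andP [Ha1 Ha2].
have h1 : (0 <= a + b%:Z) by lia.
have h2 : (absz (a + b%:Z)%R < (2 * b).+1)%N by lia.
rewrite inordK // gez0_abs //; lia.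
Qed.

End Lat.

Section Fin.
Context {R : realType}.

Lemma lnV_lt (y a : R) : 0 < y -> (ln (y^-1) < a) = (expR (- a) < y).
Proof.
move=> y0; rewrite lnV ?posrE // ltrNl -[X in X = _]ltr_expR lnK //.
Qed.

Lemma lnV_le (y a : R) : 0 < y -> (a <= ln (y^-1)) = (y <= expR (- a)).
Proof.
move=> y0; rewrite lnV ?posrE // lerNr -[X in X = _]ler_expR lnK //.
Qed.

Lemma box_cover {k} (g : 'M[R]_k) (B : R) : g \in unitmx ->
  exists b : nat, forall z : 'cV[int]_k, mnorm k (g *m zR z) <= B ->
    exists x : box k b, dec x = z.
Proof.
move=> gu; have [C C0 HC] := lat_disc g gu.
have h0 : 0 <= C * `|B| by rewrite mulr_ge0 // ltW.
exists (Num.Def.archi_bound (C * `|B|)) => z hz.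
exists (enc _ z); apply: encK; apply: int_bound.
apply: (le_trans (HC z)); apply: ltW.
have h1 : C * mnorm k (g *m zR z) <= C * `|B|.
  by rewrite ler_pM2l //; apply: (le_trans hz); exact: ler_norm.
exact: (le_lt_trans h1 (archi_boundP h0)).
Qed.

Lemma fin_min {k} (g : 'M[R]_k) (B : R) (f : 'cV[R]_k -> R) : g \in unitmx ->
  (forall z : 'cV[int]_k, z != 0 -> 0 < f (g *m zR z)) ->
  exists2 eta, 0 < eta & forall z : 'cV[int]_k, z != 0 ->
     mnorm k (g *m zR z) <= B -> eta <= f (g *m zR z).
Proof.
move=> gu hf; have [b Hb] := box_cover g B gu.
exists (\big[Num.min/1]_(x : box k b | dec x != 0) f (g *m zR (dec x))).
  by apply/bigmin_gtP; split => // x; apply: hf.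
move=> z z0 hz; have [x hx] := Hb z hz.
by rewrite -hx; apply: bigmin_le_cond; rewrite hx.
Qed.

Lemma latE {k} (g : 'M[R]_k) : lattice_of k g = [set g *m zR z | z in [set: 'cV[int]_k]].
Proof. by []. Qed.

Lemma lat_nonzero {k} (g : 'M[R]_k) v : lattice_of k g v -> v != 0 ->
  exists2 z, z != 0 & v = g *m zR z.
Proof.
move=> [z _ <-] hv; exists z => //; apply: contraNN hv => /eqP ->.
apply/eqP; apply/matrixP => i j; rewrite !mxE big1 // => l _.
by rewrite !mxE mulr0.
Qed.

Lemma latD0 {k} (g : 'M[R]_k) v : (lattice_of k g `\ 0) v ->
  exists2 z, z != 0 & v = g *m zR z.
Proof.
move=> [Lv v0]; apply: lat_nonzero => //; apply/eqP => h; exact: v0.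
Qed.

Lemma latD0_in {k} (g : 'M[R]_k) z : g \in unitmx -> z != 0 ->
  (lattice_of k g `\ 0) (g *m zR z).
Proof.
move=> gu z0; split; first by exists z.
by move=> /= /eqP; apply/negP; apply: unit_mul_neq0 => //; apply: zR_neq0.
Qed.

Lemma Delta_has_sup {k} (g : 'M[R]_k) (z : 'cV[int]_k) : g \in unitmx -> z != 0 ->
  has_sup [set ln ((mnorm k v)^-1) | v in lattice_of k g `\ 0].
Proof.
move=> gu z0; have [C C0 HC] := lat_disc g gu.
split; first by exists (ln ((mnorm k (g *m zR z))^-1)); exists (g *m zR z) => //; apply: latD0_in.
exists (ln C) => y [v /latD0 [z' z'0 ->] <-].
have p0 : 0 < mnorm k (g *m zR z') by apply: mnorm_gt0; apply: unit_mul_neq0 => //; apply: zR_neq0.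
rewrite ler_ln ?posrE ?invr_gt0 // -div1r ler_pdivrMr //.
exact: (le_trans (@zR_ge1 R _ z' z'0) (HC z')).
Qed.

Lemma sup_ge {k} (g : 'M[R]_k) (z : 'cV[int]_k) : g \in unitmx -> z != 0 ->
  ln ((mnorm k (g *m zR z))^-1) <= Delta k (lattice_of k g).
Proof.
move=> gu z0; apply: sup_upper_bound; first exact: Delta_has_sup gu z0.
by exists (g *m zR z) => //; apply: latD0_in.
Qed.

Lemma attain {k} (g : 'M[R]_k) (rho : R) : g \in unitmx -> (0 < k)%N ->
  rho <= Delta k (lattice_of k g) ->
  exists2 z : 'cV[int]_k, z != 0 & mnorm k (g *m zR z) <= expR (- rho).
Proof.
move=> gu k0 hrho.
have [//|H] := pselect (exists2 z : 'cV[int]_k, z != 0 & mnorm k (g *m zR z) <= expR (- rho)).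
have {}H : forall z : 'cV[int]_k, z != 0 -> expR (- rho) < mnorm k (g *m zR z).
  move=> z z0; rewrite ltNge; apply/negP => h; apply: H; by exists z.
exfalso.
have [b Hb] := box_cover g (expR (1 - rho)) gu.
pose mu := \big[Num.max/(rho - 1)]_(x : box k b | dec x != 0) ln ((mnorm k (g *m zR (dec x)))^-1).
have pos : forall z : 'cV[int]_k, z != 0 -> 0 < mnorm k (g *m zR z).
  by move=> z' /zR_neq0 h; apply: mnorm_gt0; apply: unit_mul_neq0.
have mulr : mu < rho.
  apply/bigmax_ltP; split; first by rewrite ltrBlDr ltrDl.
  by move=> x x0; rewrite lnV_lt ?pos //; apply: H.
have z1 : (const_mx 1 : 'cV[int]_k) != 0.
  apply/eqP => /matrixP/(_ (Ordinal k0) 0); rewrite !mxE => /eqP; by rewrite oner_eq0.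
suff : Delta k (lattice_of k g) <= mu by move=> h; move: (le_lt_trans (le_trans hrho h) mulr); rewrite ltxx.
apply: ge_sup; first by exists (ln ((mnorm k (g *m zR (const_mx 1)))^-1)); exists (g *m zR (const_mx 1)) => //; apply: latD0_in.
move=> y [v /latD0 [z z0 ->] <-].
have [hle|hgt] := leP (mnorm k (g *m zR z)) (expR (1 - rho)).
  have [x hx] := Hb z hle; rewrite -hx.
  by apply: le_bigmax_cond; rewrite hx.
apply: le_trans (bigmax_ge_id _ _ _ _).
apply: ltW; rewrite lnV_lt ?pos // opprB //.
Qed.


End Fin.

Lemma expn_leX (a b e : nat) : (a <= b)%N -> (a ^ e <= b ^ e)%N.
Proof. by move=> h; elim: e => // e IH; rewrite !expnS leq_mul. Qed.

Lemma count_ineq (A c m n N : nat) : (0 < n)%N ->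
  N = ((A.+1) ^ m * c ^ (m + n))%N ->
  (((A * N).+1) ^ m * c ^ (m + n) < (N.+1) ^ (m + n))%N.
Proof.
move=> n0 hN.
have h1 : ((A * N).+1 <= A.+1 * N.+1)%N by rewrite mulSn mulnS; lia.
apply: (@leq_ltn_trans ((A.+1 * N.+1) ^ m * c ^ (m + n))%N).
  by rewrite leq_mul2r expn_leX ?orbT.
rewrite expnMn -mulnA mulnC -mulnA [(c ^ _ * _)%N]mulnC -hN.
rewrite expnD ltn_pmul2l ?expn_gt0 //.
apply: (@leq_trans (N.+1)) => //.
by rewrite -{1}(expn1 N.+1) leq_pexp2l.
Qed.

Section Pigeon.
Context {R : realType}.

Lemma floor_cell (K eps : R) (A N : nat) (y1 y2 : R) : 0 < eps -> 0 <= K ->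
  2 * K / eps <= A%:R -> `|y1| <= K * N%:R -> `|y2| <= K * N%:R ->
  (inord (absz (Num.floor ((y1 + K * N%:R) / eps))) : 'I_(A * N).+1)
   = inord (absz (Num.floor ((y2 + K * N%:R) / eps))) -> `|y1 - y2| < eps.
Proof.
move=> e0 K0 hA h1 h2 heq.
have rng : forall y : R, `|y| <= K * N%:R ->
    0 <= Num.floor ((y + K * N%:R) / eps) /\
    (absz (Num.floor ((y + K * N%:R) / eps)) < (A * N).+1)%N.
  move=> y; rewrite ler_norml => /andP [hy1 hy2].
  have a0 : 0 <= (y + K * N%:R) / eps by apply: divr_ge0; [lra | exact: ltW].
  have aN : (y + K * N%:R) / eps <= (A * N)%:R.
    rewrite ler_pdivrMr // natrM.
    have hA' : 2 * K <= A%:R * eps by rewrite -ler_pdivrMr.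
    have N0 : 0 <= N%:R :> R by [].
    nra.
  have f0 : 0 <= Num.floor ((y + K * N%:R) / eps) by rewrite floor_ge0.
  split => //.
  have : (Num.floor ((y + K * N%:R) / eps))%:~R <= ((A * N)%:Z)%:~R :> R.
    exact: le_trans (floor_le _) aN.
  rewrite ler_int => hle; lia.
have [f10 f1r] := rng _ h1; have [f20 f2r] := rng _ h2.
move: heq => /(congr1 val); rewrite /= !inordK // => habs.
have feq : Num.floor ((y1 + K * N%:R) / eps) = Num.floor ((y2 + K * N%:R) / eps) by lia.
have := floor_itv ((y1 + K * N%:R) / eps); have := floor_itv ((y2 + K * N%:R) / eps).
rewrite -feq intrD => /andP [a1 b1] /andP [a2 b2].
have : `|(y1 + K * N%:R) / eps - (y2 + K * N%:R) / eps| < 1.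
  rewrite ltr_norml; apply/andP; split; lra.
have -> : (y1 + K * N%:R) / eps - (y2 + K * N%:R) / eps = (y1 - y2) / eps.
  by field; rewrite gt_eqF.
rewrite normrM [`|eps^-1|]gtr0_norm ?invr_gt0 //.
by rewrite ltr_pdivrMr // mul1r.
Qed.


Lemma claimD {m n} (g : 'M[R]_(m + n)) (eps M : R) : g \in unitmx -> 0 < eps -> (0 < n)%N ->
  exists z : 'cV[int]_(m + n),
    mnorm m (usubmx (g *m zR z)) <= eps /\ M < mnorm n (dsubmx (g *m zR z)).
Proof.
move=> gu e0 n0.
have [//|H] := pselect (exists z : 'cV[int]_(m + n),
    mnorm m (usubmx (g *m zR z)) <= eps /\ M < mnorm n (dsubmx (g *m zR z))).
exfalso.
have {}H : forall z : 'cV[int]_(m + n), mnorm m (usubmx (g *m zR z)) <= eps ->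
    mnorm (m + n) (g *m zR z) <= Num.max eps M.
  move=> z hz; apply: mnorm_col_le; first by rewrite le_max hz.
  rewrite le_max; apply/orP; right; rewrite leNgt; apply/negP => h; apply: H; by exists z.
have [C C0 HC] := lat_disc g gu.
have hB0 : 0 <= C * `|Num.max eps M| by rewrite mulr_ge0 // ltW.
set b := Num.Def.archi_bound (C * `|Num.max eps M|).
have Hb : forall z : 'cV[int]_(m + n), mnorm m (usubmx (g *m zR z)) <= eps ->
    forall i, `|z i 0| <= b%:Z.
  move=> z hz; apply: int_bound; apply: (le_trans (HC z)); apply: ltW.
  apply: (le_lt_trans _ (archi_boundP hB0)).
  rewrite ler_pM2l //; apply: le_trans (H z hz) _; exact: ler_norm.
set K := mxsum g.
have K0 : 0 <= K := mxsum_ge0 g.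
have hA0 : 0 <= 2 * K / eps by rewrite divr_ge0 // ?mulr_ge0 // ltW.
set A := Num.Def.archi_bound (2 * K / eps).
have HA : 2 * K / eps <= A%:R := ltW (archi_boundP hA0).
set N := ((A.+1) ^ m * ((2 * b).+1) ^ (m + n))%N.
pose zz (x : {ffun 'I_(m + n) -> 'I_N.+1}) : 'cV[int]_(m + n) := \col_i ((x i : nat)%:Z).
pose p x := g *m zR (zz x).
have pb : forall x i, `|p x i 0| <= K * N%:R.
  move=> x i; apply: le_trans (le_mnorm (p x) i) _.
  apply: le_trans (mnorm_mul _ _) _; rewrite ler_wpM2l //.
  apply/mnorm_leP; split => // j; rewrite !mxE.
  change (`|(x j : nat)%:R| <= N%:R :> R); rewrite normr_nat ler_nat.
  by rewrite -ltnS ltn_ord.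
pose cellf x : {ffun 'I_m -> 'I_(A * N).+1} :=
  [ffun i => inord (absz (Num.floor ((p x (lshift n i) 0 + K * N%:R) / eps)))].
have cell_lt : forall x y, cellf x = cellf y ->
    mnorm m (usubmx (p x - p y)) <= eps.
  move=> x y hxy; apply/mnorm_leP; split; first exact: ltW.
  move=> i.
  have -> : usubmx (p x - p y) i 0 = p x (lshift n i) 0 - p y (lshift n i) 0.
    by rewrite !mxE.
  apply: ltW; apply: (floor_cell K eps A N _ _ e0 K0 HA (pb x (lshift n i)) (pb y (lshift n i))).
  by move: hxy => /ffunP /(_ i); rewrite !ffunE.
pose x0 : {ffun 'I_(m + n) -> 'I_N.+1} := [ffun _ => ord0].
pose rep c := odflt x0 [pick y | cellf y == c].
pose Phi x := (cellf x, enc b (zz x - zz (rep (cellf x)))).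
have repP : forall x, cellf (rep (cellf x)) = cellf x.
  move=> x; rewrite /rep; case: pickP => [y /eqP -> //|].
  by move=> /(_ x); rewrite eqxx.
have encd : forall x, dec (enc b (zz x - zz (rep (cellf x)))) = zz x - zz (rep (cellf x)).
  move=> x; apply: encK; apply: Hb.
  rewrite zRB mulmxBr; apply: cell_lt; by rewrite repP.
have Phi_inj : injective Phi.
  move=> x y [hc he].
  have ex := encd x; have ey := encd y.
  rewrite he -hc in ex; rewrite -hc in ey; rewrite ex in ey.
  move/addIr: ey => hz.
  apply/ffunP => i; apply: val_inj.
  by move: hz => /matrixP /(_ i 0); rewrite !mxE => -[].
have := leq_card _ Phi_inj; rewrite card_prod /box !card_ffun !card_ord.
by rewrite leqNgt (count_ineq A ((2 * b).+1) m n N n0 erefl).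
Qed.

End Pigeon.

Section FT.
Context {R : realType}.

Lemma pow_le_exp (U a : R) m : (0 < m)%N -> 0 <= U ->
  (U ^+ m <= expR (m%:R * a)) = (U <= expR a).
Proof.
move=> m0 U0; rewrite expRM_natl ler_pXn2r // nnegrE // ltW // expR_gt0.
Qed.

Lemma ft_usub m n t (v : 'cV[R]_(m + n)) :
  usubmx (ft m n t *m v) = expR (t / m%:R) *: usubmx v.
Proof.
apply/matrixP => i j; rewrite /ft mul_diag_mx !mxE.
by rewrite (unsplitK (inl _ i)) mxE.
Qed.

Lemma ft_dsub m n t (v : 'cV[R]_(m + n)) :
  dsubmx (ft m n t *m v) = expR (- t / n%:R) *: dsubmx v.
Proof.
apply/matrixP => i j; rewrite /ft mul_diag_mx !mxE.
by rewrite (unsplitK (inr _ i)) mxE.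
Qed.

Lemma ft_unit m n (t : R) : (ft m n t : 'M[R]_(m + n)) \in unitmx.
Proof.
rewrite unitmxE unitfE /ft det_diag; apply/prodf_neq0 => i _.
case: (split_ordP i) => j ->.
  by rewrite (row_mxEl (const_mx (expR (t / m%:R)))) mxE gt_eqF ?expR_gt0.
by rewrite (row_mxEr (const_mx (expR (t / m%:R)))) mxE gt_eqF ?expR_gt0.
Qed.

Lemma ft_lat m n t (g : 'M[R]_(m + n)) :
  [set ft m n t *m v | v in lattice_of (m + n) g] = lattice_of (m + n) (ft m n t *m g).
Proof.
apply/seteqP; split => w /=.
  by move=> [v [z _ <-] <-]; exists z => //; rewrite mulmxA.
by move=> [z _ <-]; exists (g *m zR z); [exists z | rewrite mulmxA].
Qed.

Lemma usubmxZ m n (a : R) (v : 'cV[R]_(m + n)) : usubmx (a *: v) = a *: usubmx v.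
Proof. by apply/matrixP => i j; rewrite !mxE. Qed.

Lemma dsubmxZ m n (a : R) (v : 'cV[R]_(m + n)) : dsubmx (a *: v) = a *: dsubmx v.
Proof. by apply/matrixP => i j; rewrite !mxE. Qed.

Lemma s_cont (r : R -> R) (T0 Tb : R) (c : R) :
  {within [set t : R | T0 <= t], continuous r} ->
  {within `[T0, Tb], continuous (fun t => t - c * r t)}.
Proof.
move=> rc.
have rc' : {within `[T0, Tb], continuous r}.
  apply: continuous_subspaceW rc => x /=; rewrite in_itv /= => /andP [].
  done.
have idc : {within `[T0, Tb], continuous (fun t : R => t)}.
  by apply: continuous_subspaceT => y; exact: cvg_id.
have cc : {within `[T0, Tb], continuous (fun t : R => c)}.
  by apply: continuous_subspaceT => y; exact: cvg_cst.
move=> x; apply: cvgB; first exact: idc x.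
apply: cvgM; [exact: cc x | exact: rc' x].
Qed.

Lemma dir1 m n (hm : (0 < m)%N) (hn : (0 < n)%N) (psi : R -> R) (r : R -> R)
  (hr : is_Dmn m n psi r) (g : 'M[R]_(m + n)) (gu : g \in unitmx) :
  psi_n_approximable m n psi (lattice_of (m + n) g) ->
  forall T : R, exists t, T < t /\ 0 < t /\
     r t <= Delta (m + n) [set ft m n t *m v | v in lattice_of (m + n) g].
Proof.
move: hr; rewrite /is_Dmn /=; set T0 := t0 m n psi => -[rc [sinc [sinf [_ [_ hpsi]]]]].
move=> Happ T.
have m0R : m%:R != 0 :> R by rewrite pnatr_eq0 -lt0n.
have n0R : n%:R != 0 :> R by rewrite pnatr_eq0 -lt0n.
have mpos : 0 < m%:R :> R by rewrite ltr0n.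
have npos : 0 < n%:R :> R by rewrite ltr0n.
pose s t := t - n%:R * r t.
have smono : forall a b, T0 <= a -> a <= b -> s a <= s b.
  move=> a b ha; rewrite le_eqVlt => /orP [/eqP -> //| hab]; exact: ltW (sinc a b ha hab).
set T2 := Num.max T0 (Num.max T 0) + 1.
have T2a : T0 < T2 by rewrite /T2 ltr_pwDr // le_max lexx.
have T2b : T < T2 by rewrite /T2 ltr_pwDr // le_max le_max lexx orbT.
have T2c : 0 < T2 by rewrite /T2 ltr_pwDr // le_max le_max lexx !orbT.
set y := Num.max (s T2) (s T0).
have [v Lv [hD hU]] := Happ (expR (y / n%:R)).
set D := mnorm n (dsubmx v) in hD hU.
set U := mnorm m (usubmx v) in hU.
have D0 : 0 < D := lt_trans (expR_gt0 _) hD.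
set Y := n%:R * ln D.
have yY : y < Y.
  move: hD; rewrite -[D in _ < D](lnK D0) ltr_expR ltr_pdivrMr // mulrC //.
have [T1 HT1] := sinf Y.
set Tb := Num.max T1 T0.
have hTb : Y < s Tb by apply: HT1; rewrite le_max lexx.
have T0b : T0 <= Tb by rewrite le_max lexx orbT.
have [t tin st] : exists2 t, t \in `[T0, Tb] & s t = Y.
  apply: IVT => //; first exact: s_cont.
  have h1 : s T0 <= Y by apply: ltW; apply: le_lt_trans yY; rewrite le_max lexx orbT.
  by rewrite ge_min h1 le_max (ltW hTb) orbT.
have tT0 : T0 <= t by move: tin; rewrite in_itv /= => /andP [].
have tT2 : T2 < t.
  rewrite ltNge; apply/negP => h; have := smono _ _ tT0 h; rewrite st => hY.
  have : s T2 <= y by rewrite le_max lexx.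
  move=> h2; move: (lt_le_trans yY (le_trans hY h2)); by rewrite ltxx.
exists t; split; first exact: lt_trans T2b tT2.
split; first exact: lt_trans T2c tT2.
rewrite ft_lat.
case: Lv => z _ hv.
have z0 : z != 0.
  apply/eqP => hz; move: D0; rewrite /D -hv hz.
  have -> : map_mx (fun z : int => z%:~R) (0 : 'cV[int]_(m + n)) = (0 : 'cV[R]_(m + n)).
    by apply/matrixP => i j; rewrite !mxE.
  have -> : dsubmx (g *m 0) = 0 :> 'cV[R]_n by apply/matrixP => i j; rewrite !mxE big1 // => l _; rewrite mxE mulr0.
  by rewrite mnorm0 ltxx.
apply: le_trans (sup_ge _ z (_ : _ \in unitmx) z0); last by rewrite unitmx_mul ft_unit gu.
have fpos : 0 < mnorm (m + n) ((ft m n t *m g) *m zR z).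
  apply: mnorm_gt0; apply: unit_mul_neq0; first by rewrite unitmx_mul ft_unit gu.
  exact: zR_neq0.
rewrite lnV_le // -mulmxA hv.
apply: mnorm_col_le.
  rewrite ft_usub mnormZ ger0_norm ?expR_ge0 //.
  have st' : t - n%:R * r t = Y := st.
  have hU' : U <= expR (- t / m%:R - r t).
    rewrite -(pow_le_exp _ _ _ hm) ?mnorm_ge0 //.
    apply: (le_trans hU).
    have -> : D ^+ n = expR Y by rewrite /Y expRM_natl lnK.
    rewrite -st' hpsi //.
    have -> : m%:R * (- t / m%:R - r t) = - t - m%:R * r t by field.
    exact: lexx.
  apply: le_trans (ler_wpM2l (expR_ge0 _) hU') _.
  rewrite -expRD.
  have -> : t / m%:R + (- t / m%:R - r t) = - r t by field.
  exact: lexx.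
rewrite ft_dsub mnormZ ger0_norm ?expR_ge0 //.
have st' : t - n%:R * r t = Y := st.
rewrite -[X in _ * X <= _](lnK D0) -expRD.
have -> : - t / n%:R + ln D = - r t.
  have -> : ln D = Y / n%:R by rewrite /Y; field.
  by rewrite -st'; field.
exact: lexx.
Qed.

Lemma dir2 m n (hm : (0 < m)%N) (hn : (0 < n)%N) (psi : R -> R)
  (psi_pos : forall x, 1 <= x -> 0 < psi x)
  (psi_noninc : forall x y, 1 <= x -> x <= y -> psi y <= psi x)
  (r : R -> R) (hr : is_Dmn m n psi r) (g : 'M[R]_(m + n)) (gu : g \in unitmx) :
  (forall T : R, exists t, T < t /\ 0 < t /\
     r t <= Delta (m + n) [set ft m n t *m v | v in lattice_of (m + n) g]) ->
  psi_n_approximable m n psi (lattice_of (m + n) g).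
Proof.
move: hr; rewrite /is_Dmn /=; set T0 := t0 m n psi => -[_ [_ [sinf [_ [s0 hpsi]]]]].
move=> HR M.
have m0R : m%:R != 0 :> R by rewrite pnatr_eq0 -lt0n.
have n0R : n%:R != 0 :> R by rewrite pnatr_eq0 -lt0n.
have mpos : 0 < m%:R :> R by rewrite ltr0n.
have npos : 0 < n%:R :> R by rewrite ltr0n.
set M1 := Num.max M 1.
have M1a : M <= M1 by rewrite le_max lexx.
have M1b : 1 <= M1 by rewrite le_max lexx orbT.
have [[z [z0 hu]]|nC0] := pselect (exists z : 'cV[int]_(m + n),
    z != 0 /\ usubmx (g *m zR z) = 0).
  set v := g *m zR z.
  have v0 : v != 0 := unit_mul_neq0 g (zR z) gu (zR_neq0 z z0).
  have D0 : 0 < mnorm n (dsubmx v).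
    rewrite lt_def mnorm_ge0 andbT; apply/eqP => hd.
    move/negP: v0; apply; apply/eqP; apply: mnorm_eq0; apply/le_anti.
    rewrite mnorm_ge0 andbT.
    by apply: mnorm_col_le; [rewrite hu mnorm0 | rewrite hd].
  have hj := archi_boundP (divr_ge0 (le_trans ler01 M1b) (ltW D0)).
  set j := Num.Def.archi_bound (M1 / mnorm n (dsubmx v)) in hj.
  exists (g *m zR ((j%:Z) *: z)); first by exists (j%:Z *: z).
  rewrite zRZ -scalemxAr dsubmxZ usubmxZ -/v hu scaler0 mnorm0 !mnormZ.
  have jD : M1 < j%:R * mnorm n (dsubmx v) by rewrite -ltr_pdivrMr.
  have -> : `|(j%:Z)%:~R| = j%:R :> R by rewrite -intr_norm.
  split; first exact: le_lt_trans M1a jD.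
  rewrite expr0n gt_eqF //= ltW // psi_pos // exprn_ege1 //.
  exact: ltW (le_lt_trans M1b jD).
have hC0 : forall z : 'cV[int]_(m + n), z != 0 -> 0 < mnorm m (usubmx (g *m zR z)).
  move=> z z0; rewrite lt_def mnorm_ge0 andbT; apply/eqP => h; apply: nC0.
  by exists z; split => //; exact: mnorm_eq0 h.
have [[c c0 hc]|nCa] := pselect (exists2 c : R, 0 < c & forall x, 1 <= x -> c <= psi x).
  set eps := Num.min c 1.
  have e0 : 0 < eps by rewrite lt_min c0 ltr01.
  have [z [hu hd]] := claimD g eps M1 gu e0 hn.
  exists (g *m zR z); first by exists z.
  split; first exact: le_lt_trans M1a hd.
  apply: (@le_trans _ _ (eps ^+ m)).
    by rewrite ler_pXn2r // nnegrE ?mnorm_ge0 // ltW.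
  apply: le_trans (ler_iXnr hm (ltW e0) _) _; first by rewrite ge_min lexx orbT.
  apply: le_trans (hc _ _); first by rewrite ge_min lexx.
  by rewrite exprn_ege1 // (le_trans M1b (ltW hd)).
have nCa' : forall c, 0 < c -> exists2 x, 1 <= x & psi x < c.
  move=> c c0; apply: contrapT => h; apply: nCa; exists c => // x x1.
  rewrite leNgt; apply/negP => hx; apply: h; by exists x.
set Bd := Num.max M1 (Num.max 1 (psi 1)).
have [eta eta0 Heta] := fin_min g Bd (fun v => mnorm m (usubmx v)) gu hC0.
have [x x1 hx] := nCa' (eta ^+ m) (exprn_gt0 _ eta0).
have [T1 HT1] := sinf (ln x).
have [t [tT [t0 hrt]]] := HR (Num.max T1 T0).
have tT1 : T1 <= t by apply: ltW; apply: le_lt_trans tT; rewrite le_max lexx.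
have tT0 : T0 <= t by apply: ltW; apply: le_lt_trans tT; rewrite le_max lexx orbT.
rewrite ft_lat in hrt.
have k0 : (0 < m + n)%N by rewrite addn_gt0 hm.
have fu : ft m n t *m g \in unitmx by rewrite unitmx_mul ft_unit gu.
have [z z0 hz] := attain (ft m n t *m g) (r t) fu k0 hrt.
rewrite -mulmxA in hz; set v := g *m zR z in hz.
have hu := le_trans (mnorm_usub _) hz; rewrite ft_usub mnormZ ger0_norm ?expR_ge0 // in hu.
have hd := le_trans (mnorm_dsub _) hz; rewrite ft_dsub mnormZ ger0_norm ?expR_ge0 // in hd.
set U := mnorm m (usubmx v) in hu; set D := mnorm n (dsubmx v) in hd.
have U0 : 0 <= U by apply: mnorm_ge0.
have D0 : 0 <= D by apply: mnorm_ge0.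
set st := t - n%:R * r t.
have hU : U <= expR (- t / m%:R - r t).
  rewrite -(ler_pM2l (expR_gt0 (t / m%:R))) -expRD.
  by have -> : t / m%:R + (- t / m%:R - r t) = - r t by field.
have hUm : U ^+ m <= psi (expR st).
  rewrite hpsi //.
  have -> : - t - m%:R * r t = m%:R * (- t / m%:R - r t) by field.
  by rewrite pow_le_exp.
have hDn : D ^+ n <= expR st.
  have -> : st = n%:R * (st / n%:R) by field.
  rewrite pow_le_exp //.
  rewrite -(ler_pM2l (expR_gt0 (- t / n%:R))) -expRD.
  by have -> : - t / n%:R + st / n%:R = - r t by rewrite /st; field.
have sx : ln x < st := HT1 t tT1.
have x0 : 0 < x := lt_le_trans ltr01 x1.
have ex1 : x < expR st by rewrite -[x in x < _](lnK x0) ltr_expR.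
have [hMD|hMD] := ltP M1 D.
  exists v; first by exists z.
  split; first exact: le_lt_trans M1a hMD.
  apply: le_trans hUm (psi_noninc _ _ _ hDn).
  by rewrite exprn_ege1 // (le_trans M1b (ltW hMD)).
exfalso.
have e1 : 1 <= expR st.
  apply: le_trans (expR_ge1Dx st); rewrite lerDl; exact: s0.
have hUp : U ^+ m <= psi 1 := le_trans hUm (psi_noninc _ _ (lexx _) e1).
have Ub : U <= Num.max 1 (psi 1).
  have [U1|U1] := leP U 1; first by rewrite le_max U1.
  by rewrite le_max (le_trans (ler_eXnr hm (ltW U1)) hUp) orbT.
have vb : mnorm (m + n) v <= Bd.
  apply: mnorm_col_le; first by rewrite le_max Ub orbT.
  by rewrite le_max hMD.
have etaU : eta <= U := Heta z z0 vb.
have : U ^+ m < eta ^+ m.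
  exact: le_lt_trans hUm (le_lt_trans (psi_noninc _ _ x1 (ltW ex1)) hx).
by rewrite ltNge ler_pXn2r // ?nnegrE ?(ltW eta0) // etaU.
Qed.

End FT.

Section PA.
Context {R : realType}.

Lemma LA_u m n (A : 'M[R]_(m, n)) (z : 'cV[int]_(m + n)) :
  usubmx (block_mx 1%:M A 0 1%:M *m zR z) = A *m zR (dsubmx z) + zR (usubmx z).
Proof.
rewrite -[z in LHS]vsubmxK.
have -> : zR (col_mx (usubmx z) (dsubmx z)) = col_mx (zR (usubmx z)) (zR (dsubmx z)) :> 'cV[R]_(m + n).
  by apply/matrixP => i j; rewrite !mxE; case: (fintype.split i) => k; rewrite !mxE.
by rewrite mul_block_col col_mxKu mul1mx addrC.
Qed.

Lemma LA_d m n (A : 'M[R]_(m, n)) (z : 'cV[int]_(m + n)) :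
  dsubmx (block_mx 1%:M A 0 1%:M *m zR z) = zR (dsubmx z).
Proof.
rewrite -[z in LHS]vsubmxK.
have -> : zR (col_mx (usubmx z) (dsubmx z)) = col_mx (zR (usubmx z)) (zR (dsubmx z)) :> 'cV[R]_(m + n).
  by apply/matrixP => i j; rewrite !mxE; case: (fintype.split i) => k; rewrite !mxE.
by rewrite mul_block_col col_mxKd mul1mx mul0mx add0r.
Qed.

Lemma LA_equiv m n (psi : R -> R) (A : 'M[R]_(m, n)) :
  psi_approximable m n psi A <-> psi_n_approximable m n psi (Lambda_A m n A).
Proof.
set S := [set q : 'cV[int]_n | exists p : 'cV[int]_m,
      mnorm _ (A *m map_mx (fun z : int => z%:~R) q + map_mx (fun z : int => z%:~R) p) ^+ m
        <= psi (mnorm _ (map_mx (fun z : int => z%:~R) q) ^+ n)].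
split.
  move=> hinf M.
  have [//|H] := pselect (exists2 v, Lambda_A m n A v &
    M < mnorm _ (dsubmx v) /\ mnorm _ (usubmx v) ^+ m <= psi (mnorm _ (dsubmx v) ^+ n)).
  exfalso; apply: hinf.
  have [b Hb] := box_cover (1%:M : 'M[R]_n) M (unitmx1 _ _).
  apply: (@sub_finite_set _ _ [set dec x | x in [set: box n b]]); last first.
    exact: finite_image finite_finset.
  move=> q [p hp].
  have hq : mnorm n (1%:M *m zR q) <= M.
    rewrite mul1mx leNgt; apply/negP => hM; apply: H.
    exists (block_mx 1%:M A 0 1%:M *m zR (col_mx p q)); first by exists (col_mx p q).
    rewrite LA_u LA_d col_mxKu col_mxKd; split => //.
  have [x hx] := Hb q hq; by exists x.
move=> Happ hfin.
pose B : R := \big[Num.max/0]_(q <- finmap.enum_fset (fset_set S)) mnorm n (zR q : 'cV[R]_n).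
have [v [z _ <-] [hD hU]] := Happ B.
rewrite LA_u LA_d in hD hU.
have Sq : S (dsubmx z) by exists (usubmx z).
have : mnorm n (zR (dsubmx z)) <= B.
  have hin : dsubmx z \in finmap.enum_fset (fset_set S).
    have h := in_fset_set hfin (dsubmx z); rewrite (mem_set Sq) in h; exact: h.
  rewrite /B; exact: (le_bigmax_seq _ _ _ (fun q : 'cV[int]_n => mnorm n (zR q : 'cV[R]_n)) hin).
by rewrite leNgt hD.
Qed.

End PA.

Theorem theorem8p5 (R : realType) (m n : nat) (hm : (0 < m)%N) (hn : (0 < n)%N)
    (psi : R -> R)
    (psi_pos : forall x, 1 <= x -> 0 < psi x)
    (psi_noninc : forall x y, 1 <= x -> x <= y -> psi y <= psi x)
    (psi_cont : {within [set x : R | 1 <= x], continuous (psi : R -> R)})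
    (r : R -> R) (hr : is_Dmn m n psi r) :
  (forall g : 'M[R]_(m + n), `|\det g| = 1 ->
     (psi_n_approximable m n psi (lattice_of (m + n) g) <->
      forall T : R, exists t, T < t /\ 0 < t /\
        r t <= Delta (m + n) [set ft m n t *m v | v in lattice_of (m + n) g])) /\
  (forall A : 'M[R]_(m, n),
     (psi_approximable m n psi A <->
      forall T : R, exists t, T < t /\ 0 < t /\
        r t <= Delta (m + n) [set ft m n t *m v | v in Lambda_A m n A])).
Proof.
split.
  move=> g hg; have gu := unit_det1 g hg.
  by split; [exact: dir1 | exact: dir2].
move=> A; rewrite LA_equiv /Lambda_A.
have gu : block_mx 1%:M A 0 1%:M \in unitmx.
  by apply: unit_det1; rewrite det_ublock !det1 mulr1 normr1.
by split; [exact: dir1 | exact: dir2].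
Qed.
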